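(* Let $D\ge2$, and let MOO (''Move Only Outwards'') be any lazy and local deterministic online algorithm for the infinite server problem on layered graphs that moves servers along edges only in the direction away from the source. Then the competitive ratio of MOO on layered graphs of depth $D$ is exactly $D-\frac12$: on every layered graph of depth $D$ it is $(D-\frac12)$-competitive, and for every $\rho<D-\frac12$ there is a layered graph of depth $D$ on which it is not $\rho$-competitive.
   Context: A layered graph of depth $D$ is a graph whose (possibly infinitely many) nodes are arranged in layers $0,1,\dots,D$ such that all edges run between adjacent layers, layer $0$ consists of a single node, and every node other than that one is adjacent to at least one node of the previous layer. Its metric is the shortest-path (number of edges) distance; the single node of layer $0$ is the source. Infinite server problem: an unbounded number of servers initially reside at the source; a finite sequence of requests (nodes) is revealed one by one; each must be served immediately, without knowledge of future requests, by moving a server to it; the cost is the total distance traveled. An algorithm is lazy if it moves only one server to serve a request at an unoccupied point and moves no server if the requested point is already occupied. It is local if it moves a server from $a$ to $b$ only when there is no server at some other point $c$ with $d(a,b)=d(a,c)+d(c,b)$. An online algorithm is $\rho$-competitive if $ALG(\sigma)\le\rho\,OPT(\sigma)+c$ for all $\sigma$, with $c$ independent of $\sigma$; its competitive ratio is the infimum of such $\rho$. *)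

(* Defs.v *)
From Stdlib Require Import Reals Lra Lia Arith List ClassicalEpsilon.
Set Implicit Arguments.

(* The least natural number satisfying P (classically chosen; junk 0 if none). *)
Definition nat_min (P : nat -> Prop) : nat :=
  epsilon (inhabits 0) (fun n => P n /\ forall m, P m -> n <= m).

Record layered_graph (D : nat) := {
  node : Type;
  adj : node -> node -> Prop;
  layer : node -> nat;
  src : node;
  adj_sym : forall u v, adj u v -> adj v u;
  layer_le : forall v, layer v <= D;
  layer0 : forall v, layer v = 0 <-> v = src;
  adj_layer : forall u v, adj u v -> layer v = S (layer u) \/ layer u = S (layer v);
  has_parent : forall v, v <> src -> exists u, adj u v /\ S (layer u) = layer v
}.

Section Graph.
Variables (D : nat) (G : layered_graph D).
Local Notation V := (node G).

Inductive walk : V -> V -> nat -> Prop :=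
| walk0 : forall u, walk u u 0
| walkS : forall u w v n, adj G u w -> walk w v n -> walk u v (S n).

Definition dist (u v : V) : nat := nat_min (walk u v).

Inductive out_walk : V -> V -> Prop :=
| out0 : forall u, out_walk u u
| outS : forall u w v, adj G u w -> layer G w = S (layer G u) -> out_walk w v -> out_walk u v.

(* Configurations: servers are labelled by nat; a configuration is a finite
   list L giving the positions of servers 0..|L|-1, all other servers being
   at the source (so infinitely many servers always sit at the source). *)
Definition config := list V.
Definition pos (L : config) (i : nat) : V := nth i L (src G).
Definition served (L : config) (r : V) : Prop := exists i, pos L i = r.

Fixpoint sum_nat (f : nat -> nat) (n : nat) : nat :=
  match n with O => O | S k => sum_nat f k + f k end.

Definition move_cost (L L' : config) : nat :=
  sum_nat (fun i => dist (pos L i) (pos L' i)) (Nat.max (length L) (length L')).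

Definition initial (L : config) : Prop := forall i, pos L i = src G.

(* Deterministic online algorithm: the configuration after serving a request
   sequence depends only on that sequence (i.e. on requests seen so far). *)
Record online_alg := {
  conf : list V -> config;
  conf_init : initial (conf nil);
  conf_serves : forall s r, served (conf (s ++ r :: nil)) r
}.

Definition alg_cost (A : online_alg) (s : list V) : nat :=
  sum_nat (fun t => move_cost (conf A (firstn t s)) (conf A (firstn (S t) s)))
          (length s).

Definition valid_schedule (s : list V) (C : nat -> config) : Prop :=
  initial (C 0) /\ forall t, t < length s -> served (C (S t)) (nth t s (src G)).

Definition sched_cost (s : list V) (C : nat -> config) : nat :=
  sum_nat (fun t => move_cost (C t) (C (S t))) (length s).

Definition OPT (s : list V) : nat :=
  nat_min (fun n => exists C, valid_schedule s C /\ sched_cost s C = n).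

Definition competitive (A : online_alg) (rho : R) : Prop :=
  exists c : R, forall s : list V,
    (INR (alg_cost A s) <= rho * INR (OPT s) + c)%R.

Definition MOO (A : online_alg) : Prop :=
  forall s r,
    let L := conf A s in
    let L' := conf A (s ++ r :: nil) in
    (served L r -> forall i, pos L' i = pos L i) /\
    (~ served L r ->
       exists j, pos L' j = r /\
         (forall i, i <> j -> pos L' i = pos L i) /\
         (* local *)
         (forall c, c <> pos L j -> c <> r ->
            dist (pos L j) r = dist (pos L j) c + dist c r -> ~ served L c) /\
         (* outwards *)
         out_walk (pos L j) r).

End Graph.

(* Main.v *)
From Pilot Require Import Defs.
From Stdlib Require Import Reals.
From Stdlib Require Import Lra Lia Arith List ClassicalEpsilon Classical.
Import Pilot.Defs.


Lemma exists_min (P : nat -> Prop) : (exists n, P n) -> exists n, P n /\ forall m, P m -> n <= m.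
Proof.
  intros [n Hn]. revert Hn. induction n as [n IH] using (well_founded_induction lt_wf).
  intros Hn. destruct (classic (exists m, m < n /\ P m)) as [[m [Hm1 Hm2]]|H].
  - exact (IH m Hm1 Hm2).
  - exists n. split; auto. intros m Hm. destruct (le_lt_dec n m); auto.
    exfalso; apply H; eauto.
Qed.

Lemma nat_min_spec (P : nat -> Prop) : (exists n, P n) ->
  P (nat_min P) /\ forall m, P m -> nat_min P <= m.
Proof.
  intros H. unfold nat_min. apply (epsilon_spec (inhabits 0) (fun n => P n /\ forall m, P m -> n <= m)).
  now apply exists_min.
Qed.


Lemma sum_le (f g : nat -> nat) (n : nat) : (forall i, i < n -> f i <= g i) -> sum_nat f n <= sum_nat g n.
Proof. intros H. induction n as [|n IHn]; simpl; auto.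
  assert (A1 : sum_nat f n <= sum_nat g n) by (apply IHn; intros; apply H; lia).
  assert (A2 : f n <= g n) by (apply H; lia). lia. Qed.

Lemma sum_add (f g : nat -> nat) (n : nat) : sum_nat (fun i => f i + g i) n = sum_nat f n + sum_nat g n.
Proof. induction n; simpl; lia. Qed.

Lemma sum_mul (c : nat) (f : nat -> nat) (n : nat) : sum_nat (fun i => c * f i) n = c * sum_nat f n.
Proof. induction n; simpl; [lia|]. rewrite IHn; nia. Qed.

Lemma sum_ext (f g : nat -> nat) (n : nat) : (forall i, i < n -> f i = g i) -> sum_nat f n = sum_nat g n.
Proof. induction n; simpl; intros H; auto. rewrite IHn by (intros; apply H; lia). rewrite H by lia. auto. Qed.

Lemma sum_zero (f : nat -> nat) (n : nat) : (forall i, i < n -> f i = 0) -> sum_nat f n = 0.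
Proof. induction n; simpl; intros H; auto. rewrite IHn by (intros; apply H; lia). rewrite H by lia. auto. Qed.

Lemma sum_single (f : nat -> nat) (n j : nat) : (forall i, i <> j -> f i = 0) -> sum_nat f n <= f j.
Proof. induction n; simpl; intros H; try lia. specialize (IHn H). destruct (Nat.eq_dec n j).
  - subst. rewrite (sum_zero f j) by (intros; apply H; lia). lia.
  - rewrite H by auto. lia. Qed.

Lemma sum_single_eq (f : nat -> nat) (n j : nat) : j < n -> (forall i, i <> j -> f i = 0) -> sum_nat f n = f j.
Proof. induction n; simpl; intros Hj H; try lia. destruct (Nat.eq_dec n j).
  - subst. rewrite (sum_zero f j) by (intros; apply H; lia). lia.
  - rewrite H by auto. rewrite IHn; auto; lia. Qed.

Lemma sum_tail (f : nat -> nat) (M N : nat) : M <= N -> (forall i, M <= i -> i < N -> f i = 0) -> sum_nat f N = sum_nat f M.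
Proof. induction N; intros HM H. assert (M = 0) by lia; subst; auto.
  destruct (Nat.eq_dec M (S N)). subst; auto. simpl. rewrite IHN by (try lia; intros; apply H; lia). rewrite H by lia. lia. Qed.

Lemma sum_ge_term (f : nat -> nat) (n j : nat) : j < n -> f j <= sum_nat f n.
Proof. induction n; simpl; intros; try lia. destruct (Nat.eq_dec j n). subst; lia. specialize (IHn ltac:(lia)). lia. Qed.

Section G.
Variables (D : nat) (G : layered_graph D).
Local Notation V := (node G).
Local Notation ly := (layer G).

Lemma walk_snoc u v n w : walk G u v n -> adj G v w -> walk G u w (S n).
Proof. induction 1; intros. econstructor; eauto. constructor. econstructor; eauto. Qed.

Lemma walk_app u v n w m : walk G u v n -> walk G v w m -> walk G u w (n + m).
Proof. induction 1; intros; simpl; auto. econstructor; eauto. Qed.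

Lemma walk_sym u v n : walk G u v n -> walk G v u n.
Proof. induction 1. constructor. eapply walk_snoc; eauto. apply adj_sym; auto. Qed.

Lemma walk_layer u v n : walk G u v n -> ly v <= ly u + n /\ ly u <= ly v + n.
Proof. induction 1. lia. pose proof (adj_layer G _ _ H). lia. Qed.

Lemma walk_to_src v : walk G v (src G) (ly v).
Proof.
  remember (ly v) as k. revert v Heqk. induction k; intros v Hk.
  - assert (v = src G) by (apply (layer0 G); auto). subst; constructor.
  - assert (v <> src G) by (intro; subst; pose proof (proj2 (layer0 G (src G)) eq_refl); lia).
    destruct (has_parent G H) as [u [Hu1 Hu2]].
    econstructor. apply adj_sym; eauto. apply IHk. lia.
Qed.

Lemma walk_ex u v : exists n, walk G u v n.
Proof. exists (ly u + ly v). eapply walk_app. apply walk_to_src. apply walk_sym, walk_to_src. Qed.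

Lemma dist_walk u v : walk G u v (dist G u v).
Proof. apply (nat_min_spec (walk G u v) (walk_ex u v)). Qed.

Lemma dist_min u v n : walk G u v n -> dist G u v <= n.
Proof. apply (nat_min_spec (walk G u v) (walk_ex u v)). Qed.

Lemma dist_refl u : dist G u u = 0.
Proof. pose proof (dist_min u u 0 (walk0 G u)). lia. Qed.

Lemma dist_tri u v w : dist G u w <= dist G u v + dist G v w.
Proof. apply dist_min. eapply walk_app; apply dist_walk. Qed.

Lemma dist_sym u v : dist G u v = dist G v u.
Proof. apply Nat.le_antisymm; apply dist_min, walk_sym, dist_walk. Qed.

Lemma dist_layer u v : ly v <= ly u + dist G u v /\ ly u <= ly v + dist G u v.
Proof. apply walk_layer, dist_walk. Qed.

Lemma dist_src v : dist G (src G) v = ly v.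
Proof.
  apply Nat.le_antisymm. apply dist_min, walk_sym, walk_to_src.
  pose proof (dist_layer (src G) v). pose proof (proj2 (layer0 G (src G)) eq_refl). lia.
Qed.

Lemma dist_pos u v : u <> v -> 1 <= dist G u v.
Proof. intros H. pose proof (dist_walk u v). destruct (dist G u v); [inversion H0; congruence | lia]. Qed.

Lemma dist_adj u v : adj G u v -> dist G u v <= 1.
Proof. intros. apply dist_min. econstructor; eauto. constructor. Qed.

Lemma dist_one u v : dist G u v = 1 -> ly v = S (ly u) \/ ly u = S (ly v).
Proof. intros H. pose proof (dist_walk u v). rewrite H in H0. inversion H0; subst.
  inversion H5; subst. apply adj_layer; auto. Qed.

Lemma out_walk_walk u v : out_walk G u v -> ly u <= ly v /\ walk G u v (ly v - ly u).
Proof. induction 1. split; auto. replace (ly u - ly u) with 0 by lia; constructor.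
  destruct IHout_walk. split. lia. replace (ly v - ly u) with (S (ly v - ly w)) by lia. econstructor; eauto. Qed.

Lemma out_walk_dist u v : out_walk G u v -> ly u <= ly v /\ dist G u v <= ly v - ly u.
Proof. intros H. destruct (out_walk_walk u v H). split; auto. apply dist_min; auto. Qed.

Lemma layer_src : ly (src G) = 0.
Proof. apply (layer0 G); auto. Qed.

Lemma key u v : u <> v -> ly u + ly v <= (2 * D - 1) * dist G u v.
Proof.
  intros H. pose proof (dist_pos u v H). pose proof (layer_le G u). pose proof (layer_le G v).
  destruct (Nat.eq_dec (dist G u v) 1) as [E|E].
  - rewrite E. pose proof (dist_one u v E). lia.
  - assert (2 <= dist G u v) by lia. nia.
Qed.

End G.


Lemma sum_le_one (f : nat -> nat) (n c : nat) :
  (forall i k, f i <> 0 -> f k <> 0 -> i = k) -> (forall i, f i <= c) -> sum_nat f n <= c.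
Proof.
  intros H1 H2. destruct (classic (exists i, f i <> 0)) as [[i Hi]|Hn].
  - assert (sum_nat f n <= f i). { apply sum_single. intros k Hk.
    destruct (Nat.eq_dec (f k) 0) as [e|e]. exact e. exfalso. apply Hk. exact (H1 k i e Hi). }
    specialize (H2 i). lia.
  - rewrite sum_zero. lia. intros i _. destruct (Nat.eq_dec (f i) 0); auto. exfalso; eauto.
Qed.

Lemma arith1 x y : 1 <= y -> 2 <= x -> (2*x-1)*y >= 2*x-2+y.
Proof. intros. replace (2*x-1) with (S (2*x-2)) by lia. destruct y. lia. simpl. nia. Qed.

Section U.
Variables (D : nat) (G : layered_graph D).
Hypothesis HD : 2 <= D.
Local Notation V := (node G).
Local Notation ly := (layer G).

Definition E (a : V) : nat := if Nat.eqb (ly a) 0 then 0 else 2 * D - 2 - ly a.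
Definition term (a : V) (g : bool) (p : V) : nat :=
  E a + (2 * D - 1) * dist G a p + (if g then 2 * ly a else 0).

Lemma pos_over (L : config G) i : length L <= i -> pos L i = src G.
Proof. intros. unfold pos. apply nth_overflow; auto. Qed.

Lemma served_src (L : config G) : served L (src G).
Proof. exists (length L). apply pos_over; auto. Qed.

Lemma move_cost_N (Cp Cn : config G) N : length Cp <= N -> length Cn <= N ->
  move_cost Cp Cn = sum_nat (fun i => dist G (pos Cp i) (pos Cn i)) N.
Proof.
  intros. unfold move_cost. symmetry. apply sum_tail. lia.
  intros. rewrite !pos_over by lia. apply dist_refl.
Qed.

Lemma term_move a g p p' : term a g p' <= term a g p + (2 * D - 1) * dist G p p'.
Proof.
  unfold term. pose proof (dist_tri _ G a p p').
  assert ((2*D-1) * dist G a p' <= (2*D-1) * dist G a p + (2*D-1) * dist G p p') by nia. lia.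
Qed.

Lemma E_nonsrc a : a <> src G -> E a = 2 * D - 2 - ly a /\ 1 <= ly a.
Proof.
  intros H. unfold E. destruct (Nat.eqb_spec (ly a) 0).
  - exfalso; apply H; apply (layer0 G); auto.
  - split; auto; lia.
Qed.

Lemma E_src : E (src G) = 0.
Proof. unfold E. rewrite layer_src. reflexivity. Qed.

Definition Inv (N : nat) (L : config G) (last : nat -> V) (g : nat -> bool) : Prop :=
  (forall i, N <= i -> last i = src G) /\
  (forall i, g i = false -> last i <> src G -> served L (last i)) /\
  (forall i k, g i = false -> g k = false -> last i = last k -> last i <> src G -> i = k).

Definition Phi (N : nat) (C : config G) (last : nat -> V) (g : nat -> bool) : nat :=
  sum_nat (fun i => term (last i) (g i) (pos C i)) N.

Lemma step (N : nat) (L L' Cp Cn : config G) (r : V) last g :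
  (served L r -> forall i, pos L' i = pos L i) ->
  (~ served L r -> exists j, pos L' j = r /\ (forall i, i <> j -> pos L' i = pos L i) /\ out_walk G (pos L j) r) ->
  length Cp <= N -> length Cn <= N -> served Cn r ->
  Inv N L last g ->
  exists last' g', Inv N L' last' g' /\
    2 * move_cost L L' + Phi N Cn last' g' <= Phi N Cp last g + (2 * D - 1) * move_cost Cp Cn.
Proof.
  intros Hs Hns HCp HCn [i0 Hi0] [I1 [I2 I3]].
  rewrite (move_cost_N Cp Cn N HCp HCn).
  destruct (classic (served L r)) as [Hr|Hr].
  -
    exists last, g. split.
    + split; [auto|split; auto]. intros i Hg Hl. destruct (I2 i Hg Hl) as [m Hm]. exists m. rewrite Hs; auto.
    + assert (move_cost L L' = 0). { unfold move_cost. apply sum_zero. intros. rewrite Hs; auto. apply dist_refl. }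
      rewrite H. unfold Phi. rewrite <- sum_mul, <- sum_add. simpl.
      apply sum_le. intros. apply term_move.
  - destruct (Hns Hr) as [j [Hj1 [Hj2 Hj3]]].
    set (q := pos L j) in *.
    assert (Hrs : r <> src G). { intro E0; apply Hr; rewrite E0; apply served_src. }
    assert (Hi0N : i0 < N). { destruct (le_lt_dec (length Cn) i0). rewrite pos_over in Hi0 by auto. congruence. lia. }
    assert (Hq : served L q) by (exists j; auto).
    assert (Hqr : q <> r) by (intro E0; apply Hr; rewrite <- E0; auto).
    destruct (out_walk_dist _ G _ _ Hj3) as [Hly Hdq].
    assert (Halg : move_cost L L' <= ly r - ly q).
    { eapply Nat.le_trans; [|apply Hdq]. unfold move_cost. rewrite <- Hj1.
      apply (sum_single (fun i => dist G (pos L i) (pos L' i))). intros. rewrite Hj2; auto. apply dist_refl. }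
    assert (Hflip : exists flip : nat -> bool,
      (forall i, flip i = true -> i <> i0 /\ g i = false /\ last i = q /\ q <> src G) /\
      (forall i, i <> i0 -> g i = false -> last i = q -> q <> src G -> flip i = true) /\
      (forall i k, flip i = true -> flip k = true -> i = k)).
    { destruct (classic (exists k, k <> i0 /\ g k = false /\ last k = q /\ q <> src G)) as [[k Hk]|Hno].
      - exists (fun i => Nat.eqb i k). split; [|split].
        + intros i Hi. apply Nat.eqb_eq in Hi; subst; auto.
        + intros i H1 H2 H3 H4. apply Nat.eqb_eq. destruct Hk as [Hk1 [Hk2 [Hk3 Hk4]]].
          apply I3; auto; congruence.
        + intros i k' H1 H2. apply Nat.eqb_eq in H1, H2. congruence.
      - exists (fun _ => false). split; [|split]; try discriminate.
        intros i H1 H2 H3 H4. exfalso; apply Hno; eauto. }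
    destruct Hflip as [flip [F1 [F2 F3]]].
    set (last' := fun i => if Nat.eq_dec i i0 then r else last i).
    set (g' := fun i => if Nat.eq_dec i i0 then false else if flip i then true else g i).
    exists last', g'. split.
    + split; [|split].
      * intros i Hi. unfold last'. destruct (Nat.eq_dec i i0); [lia|auto].
      * intros i Hg Hl. unfold last', g' in *. destruct (Nat.eq_dec i i0).
        { exists j; auto. }
        destruct (flip i) eqn:Ef; [discriminate|].
        destruct (I2 i Hg Hl) as [m Hm]. destruct (Nat.eq_dec m j).
        { subst m. exfalso. fold q in Hm. rewrite F2 in Ef; auto; try discriminate. congruence. }
        exists m. rewrite Hj2; auto.
      * intros i k Hgi Hgk Hl Hls. unfold last', g' in *.
        destruct (Nat.eq_dec i i0); destruct (Nat.eq_dec k i0); try congruence.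
        { destruct (flip k); [discriminate|]. exfalso. apply Hr. rewrite Hl. apply I2; auto. congruence. }
        { destruct (flip i); [discriminate|]. exfalso. apply Hr. rewrite <- Hl. apply I2; auto. }
        { destruct (flip i); [discriminate|]. destruct (flip k); [discriminate|]. apply I3; auto. }
    + set (a := fun i => if Nat.eq_dec i i0 then 2 * ly r else 0).
      set (b := fun i => if flip i then 2 * ly q else 0).
      assert (Hsum : sum_nat (fun i => term (last' i) (g' i) (pos Cn i) + a i) N <=
                     sum_nat (fun i => term (last i) (g i) (pos Cp i) + (2*D-1) * dist G (pos Cp i) (pos Cn i) + b i) N).
      { apply sum_le. intros i Hi. unfold last', g', a, b.
        destruct (Nat.eq_dec i i0).
        - subst i. rewrite Hi0. destruct (flip i0) eqn:Ef.
          { exfalso. destruct (F1 i0 Ef); auto. }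
          unfold term. rewrite dist_refl. destruct (E_nonsrc r Hrs) as [Er Hr1]. rewrite Er.
          set (a0 := last i0). set (p := pos Cp i0).
          pose proof (dist_tri _ G a0 p r).
          assert ((2*D-1) * dist G a0 r <= (2*D-1) * dist G a0 p + (2*D-1) * dist G p r) by nia.
          destruct (classic (a0 = src G)) as [Ha|Ha].
          + rewrite Ha in *. rewrite E_src. rewrite dist_src in *.
            pose proof (arith1 D (ly r) Hr1 HD). rewrite (dist_src _ G p) in H0. pose proof (layer_le G r). lia.
          + destruct (classic (a0 = r)) as [Har|Har].
            * destruct (g i0) eqn:Eg.
              -- rewrite Har. rewrite Er. rewrite Nat.mul_0_r. set (X := 2*D-2-ly r). set (Y := (2*D-1)*dist G r p). set (Z:= (2*D-1)*dist G p r). lia.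
              -- exfalso. apply Hr. rewrite <- Har. apply I2; auto.
            * pose proof (key _ G a0 r Har). destruct (E_nonsrc a0 Ha) as [Ea Ha1]. rewrite Ea.
              pose proof (layer_le G a0). pose proof (layer_le G r). destruct (g i0); lia.
        - destruct (flip i) eqn:Ef.
          + destruct (F1 i Ef) as [_ [Hg [Hl _]]]. rewrite Hg, Hl. unfold term.
            pose proof (dist_tri _ G q (pos Cp i) (pos Cn i)).
            assert ((2*D-1) * dist G q (pos Cn i) <= (2*D-1) * dist G q (pos Cp i) + (2*D-1) * dist G (pos Cp i) (pos Cn i)) by nia.
            lia.
          + pose proof (term_move (last i) (g i) (pos Cp i) (pos Cn i)). lia. }
      rewrite !sum_add in Hsum.
      assert (Ha : sum_nat a N = 2 * ly r).
      { rewrite (sum_single_eq a N i0 Hi0N). unfold a. destruct (Nat.eq_dec i0 i0); congruence.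
        intros. unfold a. destruct (Nat.eq_dec i i0); congruence. }
      assert (Hb : sum_nat b N <= 2 * ly q).
      { apply sum_le_one. intros i k H1 H2. unfold b in *. destruct (flip i) eqn:E1; [|congruence].
        destruct (flip k) eqn:E2; [|congruence]. eauto. intros. unfold b. destruct (flip i); lia. }
      rewrite sum_mul in Hsum. unfold Phi. lia.
Qed.

End U.


Lemma firstn_S_nth {T} (s : list T) t d : t < length s -> firstn (S t) s = firstn t s ++ nth t s d :: nil.
Proof. revert t; induction s; simpl; intros t H; [lia|]. destruct t; simpl; auto. rewrite <- IHs by lia. reflexivity. Qed.

Section UB.
Variables (D : nat) (G : layered_graph D).
Hypothesis HD : 2 <= D.

Lemma upper_nat (A : online_alg G) (HA : MOO A) (s : list (node G)) C :
  valid_schedule s C -> 2 * alg_cost A s <= (2 * D - 1) * sched_cost s C.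
Proof.
  intros [HC0 HCs].
  set (N := sum_nat (fun t => length (C t)) (S (length s))).
  assert (HN : forall t, t <= length s -> length (C t) <= N).
  { intros. apply (sum_ge_term (fun t => length (C t))). lia. }
  assert (Claim : forall t, t <= length s -> exists last g,
    Inv D G N (conf A (firstn t s)) last g /\
    2 * sum_nat (fun t => move_cost (conf A (firstn t s)) (conf A (firstn (S t) s))) t + Phi D G N (C t) last g
    <= (2 * D - 1) * sum_nat (fun t => move_cost (C t) (C (S t))) t).
  { induction t; intros Ht.
    - exists (fun _ => src G), (fun _ => false). split.
      + split; [|split]; auto; intros; congruence.
      + simpl. unfold Phi. rewrite sum_zero. lia. intros i _. unfold term. rewrite HC0, dist_refl, E_src. lia.
    - destruct (IHt ltac:(lia)) as [last [g [HI Hineq]]].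
      set (r := nth t s (src G)).
      pose proof (HA (firstn t s) r) as HM. cbv zeta in HM. destruct HM as [HM1 HM2].
      replace (firstn t s ++ r :: nil) with (firstn (S t) s) in HM1, HM2 by (exact (firstn_S_nth s t (src G) ltac:(lia))).
      destruct (step D G HD N (conf A (firstn t s)) (conf A (firstn (S t) s)) (C t) (C (S t)) r last g)
        as [last' [g' [HI' Hst]]].
      + exact HM1.
      + intros Hn. destruct (HM2 Hn) as [j [J1 [J2 [_ J4]]]]. exists j. auto.
      + apply HN; lia.
      + apply HN; lia.
      + apply HCs; lia.
      + exact HI.
      + exists last', g'. split; auto. cbn [sum_nat]. rewrite !Nat.mul_add_distr_l. lia. }
  destruct (Claim (length s) (le_n _)) as [last [g [_ H]]].
  unfold alg_cost, sched_cost. lia.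
Qed.

Lemma opt_exists (A : online_alg G) (s : list (node G)) :
  exists C, valid_schedule s C /\ sched_cost s C = OPT G s.
Proof.
  unfold OPT. destruct (nat_min_spec (fun n => exists C, valid_schedule s C /\ sched_cost s C = n)) as [H _].
  - exists (sched_cost s (fun t => conf A (firstn t s))). exists (fun t => conf A (firstn t s)). split; auto.
    split. simpl. apply conf_init. intros t Ht. rewrite (firstn_S_nth s t (src G)) by lia. apply conf_serves.
  - exact H.
Qed.

Lemma upper_comp (A : online_alg G) (HA : MOO A) : competitive A (INR D - 1/2)%R.
Proof.
  exists 0%R. intros s. destruct (opt_exists A s) as [C [HC HO]].
  pose proof (upper_nat A HA s C HC) as H. rewrite HO in H.
  assert (H2 : 2 * alg_cost A s + OPT G s <= 2 * D * OPT G s).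
  { replace (2 * D * OPT G s) with ((2 * D - 1) * OPT G s + OPT G s). lia.
    replace (2 * D) with (S (2 * D - 1)) at 2 by lia. simpl. lia. }
  apply le_INR in H2. rewrite plus_INR, !mult_INR in H2. simpl in H2. lra.
Qed.

End UB.


Section Gen.
Variables (D : nat) (G : layered_graph D) (A : online_alg G).
Hypothesis HA : MOO A.

Lemma moo_inv (s : list (node G)) :
  (forall i, pos (conf A s) i = src G \/ In (pos (conf A s) i) s) /\
  (forall i k, pos (conf A s) i = pos (conf A s) k -> pos (conf A s) i <> src G -> i = k).
Proof.
  induction s as [|r s IH] using rev_ind.
  - pose proof (conf_init A) as H0. split; intros; [left; apply H0|]. exfalso. apply H1, H0.
  - destruct IH as [IH1 IH2]. pose proof (HA s r) as HM. cbv zeta in HM. destruct HM as [HM1 HM2].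
    destruct (classic (served (conf A s) r)) as [Hr|Hr].
    + split.
      * intros i. rewrite (HM1 Hr). destruct (IH1 i); auto. right; apply in_or_app; auto.
      * intros i k. rewrite !(HM1 Hr). apply IH2.
    + destruct (HM2 Hr) as [j [J1 [J2 _]]]. split.
      * intros i. destruct (Nat.eq_dec i j). subst; rewrite J1; right; apply in_or_app; simpl; auto.
        rewrite J2 by auto. destruct (IH1 i); auto. right; apply in_or_app; auto.
      * intros i k Hik Hs.
        destruct (Nat.eq_dec i j); destruct (Nat.eq_dec k j); subst; auto.
        -- rewrite J1, J2 in Hik by auto. exfalso; apply Hr. exists k; auto.
        -- rewrite J1, J2 in Hik by auto. exfalso; apply Hr. exists i; auto.
        -- rewrite !J2 in Hik by auto. rewrite J2 in Hs by auto. apply IH2; auto.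
Qed.

Lemma unserved_notin (s : list (node G)) z : z <> src G -> ~ In z s -> ~ served (conf A s) z.
Proof.
  intros H1 H2 [i Hi]. destruct (proj1 (moo_inv s) i); rewrite Hi in *; auto.
Qed.

Lemma firstn_app_le {T} (s l : list T) n : n <= length s -> firstn n (s ++ l) = firstn n s.
Proof. intros H. rewrite firstn_app. replace (n - length s) with 0 by lia. simpl. apply app_nil_r. Qed.

Lemma alg_snoc (s : list (node G)) r :
  alg_cost A (s ++ r :: nil) = alg_cost A s + move_cost (conf A s) (conf A (s ++ r :: nil)).
Proof.
  unfold alg_cost. rewrite length_app. replace (length s + length (r :: nil)) with (S (length s)) by (simpl; lia).
  cbn [sum_nat]. rewrite firstn_app_le by lia. rewrite firstn_all.
  rewrite (firstn_all2 (n := S (length s))) by (rewrite length_app; simpl; lia).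
  f_equal. apply sum_ext. intros t Ht.
  rewrite !firstn_app_le by lia. reflexivity.
Qed.

Lemma mc_ge (L L' : config G) j : pos L' j <> src G -> dist G (pos L j) (pos L' j) <= move_cost L L'.
Proof.
  intros H. unfold move_cost. apply (sum_ge_term (fun i => dist G (pos L i) (pos L' i))).
  destruct (le_lt_dec (length L') j). rewrite pos_over in H; auto. congruence. lia.
Qed.

Definition SC (s : list (node G)) (cf : list (config G)) : nat :=
  sum_nat (fun t => move_cost (nth t cf nil) (nth (S t) cf nil)) (length s).

Lemma SC_snoc s cf r X : length cf = S (length s) ->
  SC (s ++ r :: nil) (cf ++ X :: nil) = SC s cf + move_cost (nth (length s) cf nil) X.
Proof.
  intros H. unfold SC. rewrite length_app. simpl. rewrite Nat.add_1_r. cbn [sum_nat].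
  rewrite app_nth1 by lia. rewrite app_nth2 by lia. rewrite H, Nat.sub_diag. simpl.
  f_equal. apply sum_ext. intros t Ht. rewrite !app_nth1 by lia. reflexivity.
Qed.

Definition VS (s : list (node G)) (cf : list (config G)) : Prop :=
  nth 0 cf nil = nil /\ forall t, t < length s -> served (nth (S t) cf nil) (nth t s (src G)).

Lemma VS_snoc s cf r X : length cf = S (length s) -> VS s cf -> served X r -> VS (s ++ r :: nil) (cf ++ X :: nil).
Proof.
  intros H [H1 H2] H3. split.
  - rewrite app_nth1 by lia. auto.
  - intros t Ht. rewrite length_app in Ht; simpl in Ht.
    destruct (Nat.eq_dec t (length s)).
    + subst. rewrite app_nth2 by lia. rewrite H, Nat.sub_diag. rewrite app_nth2 by lia. rewrite Nat.sub_diag. simpl. auto.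
    + rewrite app_nth1 by lia. rewrite app_nth1 by lia. apply H2; lia.
Qed.

Lemma OPT_le s cf : VS s cf -> OPT G s <= SC s cf.
Proof.
  intros [H1 H2]. unfold OPT.
  apply (nat_min_spec (fun n => exists C, valid_schedule s C /\ sched_cost s C = n)).
  - exists (SC s cf), (fun t => nth t cf nil). split; auto. split; auto.
    intros i. rewrite H1. unfold pos. destruct i; reflexivity.
  - exists (fun t => nth t cf nil). split; auto. split; auto.
    intros i. rewrite H1. unfold pos. destruct i; reflexivity.
Qed.

End Gen.


Inductive nd : Type := Src | Ch (k : nat) | Pn (n : nat) | Rn (a b c : nat).

Definition lyr (D : nat) (v : nd) : nat :=
  match v with Src => 0 | Ch k => S (Nat.min k (D - 3)) | Pn _ => D - 1 | Rn _ _ _ => D end.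

Definition link (u v : nd) : Prop :=
  match u, v with
  | Src, Ch _ => True | Src, Pn _ => True | Ch _, Ch _ => True | Ch _, Pn _ => True
  | Pn n, Rn a b c => n = a \/ n = b \/ n = c
  | _, _ => False end.

Definition edge (D : nat) (u v : nd) : Prop := link u v /\ lyr D v = S (lyr D u).
Definition adjG (D : nat) (u v : nd) : Prop := edge D u v \/ edge D v u.

Lemma adjG_sym D u v : adjG D u v -> adjG D v u.
Proof. unfold adjG; tauto. Qed.

Lemma lyr_le D (HD : 2 <= D) v : lyr D v <= D.
Proof. destruct v; simpl; lia. Qed.

Lemma lyr0 D (HD : 2 <= D) v : lyr D v = 0 <-> v = Src.
Proof. destruct v; simpl; split; intros; try discriminate; try lia; auto. Qed.

Lemma adj_lyr D u v : adjG D u v -> lyr D v = S (lyr D u) \/ lyr D u = S (lyr D v).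
Proof. unfold adjG, edge; tauto. Qed.

Lemma par D (HD : 2 <= D) v : v <> Src -> exists u, adjG D u v /\ S (lyr D u) = lyr D v.
Proof.
  intros Hv. destruct v as [|k|n|a b c].
  - congruence.
  - destruct (Nat.min k (D - 3)) as [|m] eqn:Em.
    + exists Src. split; [left; split; simpl; [exact I|rewrite Em; auto]|simpl; rewrite Em; auto].
    + exists (Ch m). assert (Nat.min m (D - 3) = m) by lia.
      split; [left; split; simpl; [exact I|]|]; simpl; rewrite Em, H; auto.
  - destruct (Nat.eq_dec D 2).
    + exists Src. split; [left; split; simpl; [exact I|]|]; simpl; lia.
    + exists (Ch (D - 3)). split; [left; split; simpl; [exact I|]|]; simpl; lia.
  - exists (Pn a). split; [left; split; simpl; [auto|]|]; simpl; lia.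
Qed.

Definition GG (D : nat) (HD : 2 <= D) : layered_graph D :=
  @Build_layered_graph D nd (adjG D) (lyr D) Src (adjG_sym D) (lyr_le D HD) (lyr0 D HD) (adj_lyr D) (par D HD).

Definition low (z : nd) : Prop := z = Src \/ exists k, z = Ch k.

Section Low.
Variables (D : nat) (HD : 2 <= D).
Local Notation G := (GG D HD).

Lemma step_low (u w : nd) : adjG D u w -> lyr D w = S (lyr D u) -> low w -> low u.
Proof.
  intros _ Hl [Hw|[k Hw]]; subst; destruct u; simpl in Hl; unfold low; eauto; lia.
Qed.

Lemma step_P (u : nd) n : adjG D u (Pn n) -> lyr D (Pn n) = S (lyr D u) -> low u.
Proof.
  intros _ Hl. destruct u; simpl in Hl; unfold low; eauto; lia.
Qed.

Lemma step_R (u : nd) a b c : adjG D u (Rn a b c) -> u = Pn a \/ u = Pn b \/ u = Pn c.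
Proof.
  intros [[H1 H2]|[H1 H2]]; destruct u; simpl in H1; try contradiction.
  destruct H1 as [ -> | [ -> | -> ] ]; auto.
Qed.

Lemma ow_low (u v : nd) : out_walk G u v -> low v -> low u.
Proof.
  induction 1; auto. intros Hv. apply (step_low u w); auto; assumption.
Qed.

Lemma ow_P (u : nd) n : out_walk G u (Pn n) -> u = Pn n \/ low u.
Proof.
  intros H. remember (Pn n) as v eqn:Ev. revert Ev.
  induction H; intros Ev; auto.
  right. destruct (IHout_walk Ev) as [Hw|Hw].
  - subst w. subst v. apply (step_P u n); assumption.
  - apply (step_low u w); assumption.
Qed.

Lemma ow_R (u : nd) a b c : out_walk G u (Rn a b c) ->
  u = Rn a b c \/ u = Pn a \/ u = Pn b \/ u = Pn c \/ low u.
Proof.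
  intros H. remember (Rn a b c) as v eqn:Ev. revert Ev.
  induction H; intros Ev; auto.
  subst v. destruct (IHout_walk eq_refl) as [Hw|[Hw|[Hw|[Hw|Hw]]]]; try subst w.
  - destruct (step_R u a b c H) as [?|[?|?]]; auto.
  - right; right; right; right. apply (step_P u a); assumption.
  - right; right; right; right. apply (step_P u b); assumption.
  - right; right; right; right. apply (step_P u c); assumption.
  - right; right; right; right. apply (step_low u w); assumption.
Qed.

End Low.


Section Gen2.
Variables (D : nat) (G : layered_graph D) (A : online_alg G).
Hypothesis HA : MOO A.

Lemma moo_step_facts (s : list (node G)) r : ~ served (conf A s) r ->
  exists q, served (conf A s) q /\ q <> r /\ out_walk G q r /\
   (forall c, c <> q -> c <> r -> dist G q r = dist G q c + dist G c r -> ~ served (conf A s) c) /\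
   dist G q r <= move_cost (conf A s) (conf A (s ++ r :: nil)) /\
   (q <> src G -> ~ served (conf A (s ++ r :: nil)) q) /\
   (forall z, z <> q -> served (conf A s) z -> served (conf A (s ++ r :: nil)) z).
Proof.
  intros Hns. pose proof (HA s r) as HM. cbv zeta in HM. destruct HM as [_ HM2].
  destruct (HM2 Hns) as [j [J1 [J2 [J3 J4]]]].
  assert (Hrs : r <> src G) by (intro E0; apply Hns; rewrite E0; apply served_src).
  exists (pos (conf A s) j). split; [exists j; reflexivity|].
  assert (Hq : pos (conf A s) j <> r) by (intro E0; apply Hns; exists j; auto).
  split; [auto|split; [auto|split; [auto|split]]].
  - assert (Hm := mc_ge _ G (conf A s) (conf A (s ++ r :: nil)) j ltac:(rewrite J1; auto)).
    rewrite J1 in Hm. exact Hm.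
  - split.
    + intros Hqs [i Hi]. destruct (Nat.eq_dec i j).
      * subst. rewrite J1 in Hi. auto.
      * rewrite J2 in Hi by auto. apply n. apply (proj2 (moo_inv _ _ A HA s)); auto. congruence.
    + intros z Hz [m Hm]. exists m. rewrite J2; auto. intro E0; subst; auto.
Qed.

End Gen2.

Section Lower.
Variables (D : nat) (HD : 2 <= D).
Local Notation G := (GG D HD).
Variable (A : online_alg G).
Hypothesis HA : MOO A.

Definition noCh (s : list nd) : Prop := forall k, ~ In (Ch k) s.

Lemma dist_PR x a b c : (x = a \/ x = b \/ x = c) -> dist G (Pn x) (Rn a b c) = 1.
Proof.
  intros H. apply Nat.le_antisymm.
  - apply dist_adj. left. split; simpl; auto; lia.
  - apply dist_pos. discriminate.
Qed.

Lemma dist_SP m : dist G Src (Pn m) = D - 1.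
Proof. apply (dist_src _ G (Pn m)). Qed.

Lemma dist_SR a b c : dist G Src (Rn a b c) = D.
Proof. apply (dist_src _ G (Rn a b c)). Qed.

Lemma not_served_Ch s k : noCh s -> ~ served (conf A s) (Ch k).
Proof. intros H. apply (unserved_notin _ _ A HA). discriminate. apply H. Qed.

Lemma stepP (s : list nd) m : ~ served (conf A s) (Pn m) -> noCh s ->
  D - 1 <= move_cost (conf A s) (conf A (s ++ Pn m :: nil)) /\
  (forall z, z <> Src -> served (conf A s) z -> served (conf A (s ++ Pn m :: nil)) z).
Proof.
  intros Hns HC. destruct (moo_step_facts _ _ A HA s (Pn m) Hns) as [q [Q1 [Q2 [Q3 [Q4 [Q5 [Q6 Q7]]]]]]].
  destruct (ow_P D HD q m Q3) as [Hq|[Hq|[k Hq]]].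
  - contradiction.
  - subst q. rewrite dist_SP in Q5. split; auto.
  - subst q. exfalso. apply (not_served_Ch s k HC Q1).
Qed.

Lemma stepR (s : list nd) x y n :
  served (conf A s) (Pn x) -> served (conf A s) (Pn y) -> noCh s ->
  ~ In (Rn x y n) s -> ~ In (Pn n) s ->
  1 <= move_cost (conf A s) (conf A (s ++ Rn x y n :: nil)) /\
  exists v, (v = x \/ v = y) /\ ~ served (conf A (s ++ Rn x y n :: nil)) (Pn v) /\
    (forall z, z <> Pn v -> served (conf A s) z -> served (conf A (s ++ Rn x y n :: nil)) z).
Proof.
  intros Hx Hy HC HR HP.
  assert (Hns : ~ served (conf A s) (Rn x y n)) by (apply (unserved_notin _ _ A HA); [discriminate|auto]).
  destruct (moo_step_facts _ _ A HA s _ Hns) as [q [Q1 [Q2 [Q3 [Q4 [Q5 [Q6 Q7]]]]]]].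
  split.
  - pose proof (dist_pos _ G q (Rn x y n) Q2). eapply Nat.le_trans; [exact H|exact Q5].
  - destruct (ow_R D HD q x y n Q3) as [Hq|[Hq|[Hq|[Hq|[Hq|[k Hq]]]]]].
    + contradiction.
    + exists x. subst q. split; auto. split; auto. apply Q6. discriminate.
    + exists y. subst q. split; auto. split; auto. apply Q6. discriminate.
    + subst q. exfalso. apply (unserved_notin _ _ A HA s (Pn n)); auto. discriminate.
    + subst q. exfalso. apply (Q4 (Pn x)); auto; try discriminate.
      rewrite dist_SR, dist_SP, dist_PR by auto. lia.
    + subst q. exfalso. apply (not_served_Ch s k HC Q1).
Qed.

End Lower.


Lemma SC3 D (G : layered_graph D) (s : list (node G)) (cf : list (config G)) a b c X1 X2 X3 :
  length cf = S (length s) ->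
  SC D G (((s ++ a :: nil) ++ b :: nil) ++ c :: nil) (((cf ++ X1 :: nil) ++ X2 :: nil) ++ X3 :: nil)
  = SC D G s cf + move_cost (nth (length s) cf nil) X1 + move_cost X1 X2 + move_cost X2 X3.
Proof.
  intros H.
  assert (L1 : length (cf ++ X1 :: nil) = S (length (s ++ a :: nil))) by (rewrite !length_app; simpl; lia).
  assert (L2 : length ((cf ++ X1 :: nil) ++ X2 :: nil) = S (length ((s ++ a :: nil) ++ b :: nil))) by (rewrite !length_app; simpl; lia).
  rewrite SC_snoc by exact L2. rewrite SC_snoc by exact L1. rewrite SC_snoc by exact H.
  rewrite (app_nth2 (cf ++ X1 :: nil)) by (rewrite !length_app in *; simpl in *; lia).
  rewrite (app_nth2 cf) by (rewrite !length_app in *; simpl in *; lia).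
  rewrite L1. rewrite !length_app, H. simpl. replace (length s + 1 - S (length s)) with 0 by lia.
  replace (length s + 1 + 1 - S (length s + 1)) with 0 by lia. reflexivity.
Qed.

Lemma SC3' D (G : layered_graph D) (s : list (node G)) (cf : list (config G)) a b c X1 X2 X3 Y :
  length cf = S (length s) -> nth (length s) cf nil = Y ->
  SC D G (((s ++ a :: nil) ++ b :: nil) ++ c :: nil) (((cf ++ X1 :: nil) ++ X2 :: nil) ++ X3 :: nil)
  = SC D G s cf + move_cost Y X1 + move_cost X1 X2 + move_cost X2 X3.
Proof. intros H <-. apply SC3; auto. Qed.

Lemma alg3_ge D (G : layered_graph D) (A : online_alg G) (s : list (node G)) a b c m1 m2 m3 :
  m1 <= move_cost (conf A s) (conf A (s ++ a :: nil)) ->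
  m2 <= move_cost (conf A (s ++ a :: nil)) (conf A ((s ++ a :: nil) ++ b :: nil)) ->
  m3 <= move_cost (conf A ((s ++ a :: nil) ++ b :: nil)) (conf A (((s ++ a :: nil) ++ b :: nil) ++ c :: nil)) ->
  alg_cost A s + m1 + m2 + m3 <= alg_cost A (((s ++ a :: nil) ++ b :: nil) ++ c :: nil).
Proof. intros. rewrite !alg_snoc. lia. Qed.

Section Build.
Variables (D : nat) (HD : 2 <= D).
Local Notation G := (GG D HD).
Variable (A : online_alg G).
Hypothesis HA : MOO A.

Definition vacx (s : list nd) (x : nat) : bool :=
  if excluded_middle_informative (served (conf A s) (Pn x)) then true else false.

Fixpoint build (k : nat) : list nd * list (list nd) * nat * nat * nat :=
  match k with
  | O => (Pn 0 :: Pn 1 :: nil, nil :: (Pn 0 :: nil) :: (Pn 0 :: Pn 1 :: nil) :: nil, 0, 1, 2)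
  | S k => let '(s, cf, x, y, n) := build k in
    let s1 := s ++ Rn x y n :: nil in
    if vacx s1 x then
      ((s1 ++ Pn y :: nil) ++ Pn n :: nil,
       ((cf ++ (Rn x y n :: Pn y :: nil) :: nil) ++ (Rn x y n :: Pn y :: nil) :: nil) ++ (Pn n :: Pn y :: nil) :: nil,
       n, y, S n)
    else
      ((s1 ++ Pn x :: nil) ++ Pn n :: nil,
       ((cf ++ (Pn x :: Rn x y n :: nil) :: nil) ++ (Pn x :: Rn x y n :: nil) :: nil) ++ (Pn x :: Pn n :: nil) :: nil,
       x, n, S n)
  end.

Definition K0 : nat := SC _ G (Pn 0 :: Pn 1 :: nil) (nil :: (Pn 0 :: nil) :: (Pn 0 :: Pn 1 :: nil) :: nil).

Definition SInv (k : nat) (st : list nd * list (list nd) * nat * nat * nat) : Prop :=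
  match st with (s, cf, x, y, n) =>
  length cf = S (length s) /\ nth (length s) cf nil = Pn x :: Pn y :: nil /\
  VS _ G s cf /\ SC _ G s cf <= 2 * k + K0 /\ k * (2 * D - 1) <= alg_cost A s /\
  x <> y /\ x < n /\ y < n /\ served (conf A s) (Pn x) /\ served (conf A s) (Pn y) /\
  noCh s /\ (forall i, In (Pn i) s -> i < n) /\ (forall a b c, In (Rn a b c) s -> c < n)
  end.

Lemma noCh_snoc s z : noCh s -> (forall k, z <> Ch k) -> noCh (s ++ z :: nil).
Proof. intros H1 H2 k Hk. apply in_app_or in Hk. destruct Hk as [Hk|[Hk|[]]]; [apply (H1 k Hk)|apply (H2 k); auto]. Qed.

Lemma phase k s cf x y n v x' y' (X1 X2 X3 : list nd) :
  SInv k (s, cf, x, y, n) -> (v = x \/ v = y) ->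
  ~ served (conf A (s ++ Rn x y n :: nil)) (Pn v) ->
  ((x' = v /\ y' = n) \/ (x' = n /\ y' = v)) ->
  X3 = Pn x' :: Pn y' :: nil ->
  served (X1 : config G) (Rn x y n) -> served (X2 : config G) (Pn v) ->
  move_cost (G := G) (Pn x :: Pn y :: nil) X1 + move_cost (G := G) X1 X2 + move_cost (G := G) X2 X3 <= 2 ->
  SInv (S k) (((s ++ Rn x y n :: nil) ++ Pn v :: nil) ++ Pn n :: nil,
              ((cf ++ X1 :: nil) ++ X2 :: nil) ++ X3 :: nil, x', y', S n).
Proof.
  intros [H1 [H2 [H3 [H4 [H5 [H6 [H7 [H8 [H9 [H10 [H11 [H12 H13]]]]]]]]]]]] Hv Hvu Hxy HX3 HX1 HX2 Hc.
  assert (Hvn : v < n) by (destruct Hv; subst; auto).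
  assert (HR : ~ In (Rn x y n) s) by (intro HH; apply H13 in HH; lia).
  assert (HP : ~ In (Pn n) s) by (intro HH; apply H12 in HH; lia).
  destruct (stepR D HD A HA s x y n H9 H10 H11 HR HP) as [C1 _].
  set (s1 := s ++ Rn x y n :: nil) in *.
  assert (N1 : noCh s1) by (apply noCh_snoc; auto; discriminate).
  destruct (stepP D HD A HA s1 v Hvu N1) as [C2 P2].
  set (s2 := s1 ++ Pn v :: nil).
  assert (N2 : noCh s2) by (apply noCh_snoc; auto; discriminate).
  assert (U3 : ~ served (conf A s2) (Pn n)).
  { apply (unserved_notin _ _ A HA). discriminate. unfold s2, s1. intro HH.
    apply in_app_or in HH. destruct HH as [HH|[HH|[]]]; [apply in_app_or in HH; destruct HH as [HH|[HH|[]]]|].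
    - auto. - discriminate. - injection HH; lia. }
  destruct (stepP D HD A HA s2 n U3 N2) as [C3 P3].
  set (s3 := s2 ++ Pn n :: nil).
  assert (Sv : served (conf A s3) (Pn v)) by (apply P3; [discriminate|apply conf_serves]).
  assert (Sn : served (conf A s3) (Pn n)) by apply conf_serves.
  assert (L1 : length (cf ++ X1 :: nil) = S (length s1)) by (unfold s1; rewrite !length_app; simpl; lia).
  assert (L2 : length ((cf ++ X1 :: nil) ++ X2 :: nil) = S (length s2)) by (unfold s2, s1; rewrite !length_app; simpl; lia).
  assert (Ln1 : @nth (config G) (length s1) (cf ++ X1 :: nil) nil = X1).
  { rewrite app_nth2 by (unfold s1; rewrite length_app; simpl; lia). unfold s1; rewrite length_app, H1; simpl.
    replace (length s + 1 - S (length s)) with 0 by lia. reflexivity. }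
  assert (Ls2 : length s2 = S (length s1)) by (unfold s2; rewrite length_app; simpl; lia).
  assert (Ln2 : @nth (config G) (length s2) ((cf ++ X1 :: nil) ++ X2 :: nil) nil = X2).
  { rewrite app_nth2 by lia. rewrite L1, Ls2, Nat.sub_diag. reflexivity. }
  unfold SInv. split; [|split; [|split; [|split; [|split; [|split; [|split; [|split; [|split; [|split; [|split; [|split]]]]]]]]]]].
  - unfold s3, s2, s1. rewrite !length_app. simpl. lia.
  - rewrite app_nth2 by (rewrite L2; unfold s3; rewrite length_app; simpl; lia).
    rewrite L2. unfold s3. rewrite length_app. simpl. replace (length s2 + 1 - S (length s2)) with 0 by lia. simpl. auto.
  - apply VS_snoc; [exact L2| |rewrite HX3; destruct Hxy as [[-> ->]|[-> ->]]; [exists 1|exists 0]; reflexivity].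
    apply VS_snoc; [exact L1| |exact HX2].
    apply VS_snoc; [exact H1|exact H3|exact HX1].
  - unfold s3, s2, s1. rewrite (SC3' _ G s cf _ _ _ X1 X2 X3 _ H1 H2). lia.
  - eapply Nat.le_trans; [|exact (alg3_ge _ G A s _ _ _ _ _ _ C1 C2 C3)].
    simpl. lia.
  - destruct Hxy as [[-> ->]|[-> ->]]; lia.
  - destruct Hxy as [[-> ->]|[-> ->]]; lia.
  - destruct Hxy as [[-> ->]|[-> ->]]; lia.
  - destruct Hxy as [[-> ->]|[-> ->]]; auto.
  - destruct Hxy as [[-> ->]|[-> ->]]; auto.
  - apply noCh_snoc; auto; discriminate.
  - intros i Hi. unfold s3, s2, s1 in Hi. rewrite !in_app_iff in Hi. simpl in Hi.
    destruct Hi as [[[Hi|[Hi|[]]]|[Hi|[]]]|[Hi|[]]]; try discriminate; try (injection Hi; lia). apply H12 in Hi; lia.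
  - intros a b c Hi. unfold s3, s2, s1 in Hi. rewrite !in_app_iff in Hi. simpl in Hi.
    destruct Hi as [[[Hi|[Hi|[]]]|[Hi|[]]]|[Hi|[]]]; try discriminate; try (injection Hi; lia). apply H13 in Hi; lia.
Qed.

End Build.


Section Fin.
Variables (D : nat) (HD : 2 <= D).
Local Notation G := (GG D HD).
Variable (A : online_alg G).
Hypothesis HA : MOO A.

Lemma mc2 (a b c d : nd) : move_cost (G := G) (a :: b :: nil) (c :: d :: nil) = dist G a c + dist G b d.
Proof. reflexivity. Qed.

Lemma build_inv k : SInv D HD A k (build D HD A k).
Proof.
  induction k as [|k IH].
  - simpl. split; [reflexivity|split; [reflexivity|split; [|split; [|split; [|split; [|split; [|split; [|split; [|split; [|split; [|split]]]]]]]]]]].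
    + split; [reflexivity|]. intros t Ht. destruct t as [|[|t]]; [exists 0; reflexivity|exists 1; reflexivity|simpl in Ht; lia].
    + unfold K0. lia.
    + lia.
    + lia.
    + lia.
    + lia.
    + change (Pn 0 :: Pn 1 :: nil) with ((Pn 0 :: nil) ++ Pn 1 :: nil).
      apply (proj2 (stepP D HD A HA (Pn 0 :: nil) 1 ltac:(apply (unserved_notin _ _ A HA); [discriminate|simpl; intros [H|[]]; discriminate]) ltac:(intros k [H|[]]; discriminate))).
      discriminate. apply (conf_serves A nil).
    + apply (conf_serves A (Pn 0 :: nil)).
    + intros k [H|[H|[]]]; discriminate.
    + intros i [H|[H|[]]]; injection H; lia.
    + intros a b c [H|[H|[]]]; discriminate.
  - simpl. destruct (build D HD A k) as [[[[s cf] x] y] n].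
    pose proof IH as IH'. destruct IH' as [H1 [H2 [H3 [H4 [H5 [H6 [H7 [H8 [H9 [H10 [H11 [H12 H13]]]]]]]]]]]].
    assert (HR : ~ In (Rn x y n) s) by (intro HH; apply H13 in HH; lia).
    assert (HP : ~ In (Pn n) s) by (intro HH; apply H12 in HH; lia).
    destruct (stepR D HD A HA s x y n H9 H10 H11 HR HP) as [_ [v0 [Hv0 [Hu0 _]]]].
    unfold vacx. destruct (excluded_middle_informative (served (conf A (s ++ Rn x y n :: nil)) (Pn x))) as [Hx|Hx].
    + assert (v0 = y) by (destruct Hv0; subst; auto; contradiction). subst v0.
      apply (phase D HD A HA k s cf x y n y n y); auto.
      * exists 0; reflexivity.
      * exists 1; reflexivity.
      * rewrite !mc2, !dist_refl, (dist_sym _ G (Rn x y n) (Pn n)), !dist_PR; auto.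
    + apply (phase D HD A HA k s cf x y n x x n); auto.
      * exists 1; reflexivity.
      * exists 0; reflexivity.
      * rewrite !mc2, !dist_refl, (dist_sym _ G (Rn x y n) (Pn n)), !dist_PR; auto.
Qed.

Lemma lower rho : (rho < INR D - 1/2)%R -> ~ competitive A rho.
Proof.
  intros Hr [c Hc].
  set (rp := Rmax rho 0).
  assert (Hrp0 : (0 <= rp)%R) by apply Rmax_r.
  assert (Hrp1 : (rho <= rp)%R) by apply Rmax_l.
  assert (HDr : (2 <= INR D)%R) by (replace 2%R with (INR 2) by (simpl; lra); apply le_INR; auto).
  assert (Hrp2 : (rp < INR D - 1/2)%R) by (unfold rp; apply Rmax_lub_lt; lra).
  set (del := (2 * INR D - 1 - 2 * rp)%R).
  assert (Hdel : (0 < del)%R) by (unfold del; lra).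
  destruct (INR_unbounded ((rp * INR (K0 D HD) + c) / del)) as [m Hm].
  pose proof (build_inv m) as Hb. destruct (build D HD A m) as [[[[s cf] x] y] n].
  destruct Hb as [_ [_ [H3 [H4 [H5 _]]]]].
  pose proof (OPT_le _ G s cf H3) as Ho.
  specialize (Hc s).
  assert (Ho' : (INR (OPT G s) <= 2 * INR m + INR (K0 D HD))%R).
  { replace (2 * INR m + INR (K0 D HD))%R with (INR (2 * m + K0 D HD)) by (rewrite plus_INR, mult_INR; simpl; lra).
    apply le_INR; lia. }
  assert (Ha : (INR m * (2 * INR D) <= INR (alg_cost A s) + INR m)%R).
  { assert (HH : m * (2 * D) <= alg_cost A s + m).
    { replace (m * (2*D)) with (m * (2*D-1) + m). lia. rewrite <- Nat.mul_succ_r. f_equal. lia. }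
    apply le_INR in HH. rewrite plus_INR, !mult_INR in HH. simpl in HH. lra. }
  assert (HO0 : (0 <= INR (OPT G s))%R) by apply pos_INR.
  assert (Hm' : (rp * INR (K0 D HD) + c < INR m * del)%R).
  { replace (rp * INR (K0 D HD) + c)%R with (((rp * INR (K0 D HD) + c) / del) * del)%R by (field; lra).
    apply Rmult_lt_compat_r; lra. }
  assert (Hx : (rho * INR (OPT G s) <= rp * (2 * INR m + INR (K0 D HD)))%R).
  { apply Rle_trans with (rp * INR (OPT G s))%R. apply Rmult_le_compat_r; auto. apply Rmult_le_compat_l; auto. }
  unfold del in Hm'. nra.
Qed.

End Fin.

Theorem theorem7 (D : nat) (HD : 2 <= D)
  (A : forall G : layered_graph D, online_alg G)
  (HA : forall G : layered_graph D, MOO (A G)) :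
  (forall G : layered_graph D, competitive (A G) (INR D - 1/2)%R) /\
  (forall rho : R, (rho < INR D - 1/2)%R ->
     exists G : layered_graph D, ~ competitive (A G) rho).
Proof.
  split.
  - intros G. apply (upper_comp D G HD (A G) (HA G)).
  - intros rho Hr. exists (GG D HD). apply (lower D HD (A (GG D HD)) (HA (GG D HD)) rho Hr).
Qed.
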